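(* Let $a,b>0$, $\alpha\in\mathbb R$, and $\rho_1,\rho_2\ge0$ with $\rho_1>0$ or $\rho_2>0$. Let $X\sim\mathrm{Binom}(m_1,\frac{a\log n}{n})$ and $R\sim\mathrm{Binom}(m_2,\frac{b\log n}{n})$ be independent, where $m_1=\rho_1n+o(n)$ and $m_2=\rho_2n+o(n)$, and let $k$ be an integer with $k=\alpha\log n+o(\log n)$. If $\alpha\le a\rho_1-b\rho_2$ (and, when $\rho_2=0$, $\alpha>0$), then $$\mathbb P\{X-R\le k\}=n^{-g(\rho_1,\rho_2,a,b,\alpha)+o(1)},$$ where, with $\gamma=\sqrt{\alpha^2+4\rho_1\rho_2ab}$, $$g(\rho_1,\rho_2,a,b,\alpha)=\begin{cases}a\rho_1+b\rho_2-\gamma-\frac{\alpha}{2}\log\frac{(\gamma-\alpha)a\rho_1}{(\gamma+\alpha)b\rho_2},&\rho_1,\rho_2>0,\\ \rho_2b+\alpha\log\frac{-e\rho_2b}{\alpha},&\rho_1=0,\rho_2>0,\\ \rho_1a-\alpha\log\frac{e\rho_1a}{\alpha},&\rho_1>0,\rho_2=0.\end{cases}$$ Furthermore, for any nonnegative integers $m_1,m_2$ (not both zero) and integer $k$ with $k\le(m_1a-m_2b)\log n/n$ (and $k>0$ if $m_2=0$), $$\mathbb P\{X-R\le k\}\le n^{-g(m_1/n,\,m_2/n,\,a,\,b,\,k/\log n)}.$$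
   Context: $\mathrm{Binom}(m,p)$ denotes the binomial distribution; logarithms are natural. *)

(* Defs.v *)
From Stdlib Require Import Reals Lra Lia ZArith Arith.
Open Scope R_scope.

Definition binom_pmf (m : nat) (p : R) (x : nat) : R :=
  C m x * p ^ x * (1 - p) ^ (m - x).

(* P{X - R <= k} for independent X ~ Binom(m1,p), R ~ Binom(m2,q),
   written as the explicit finite sum over the joint pmf. *)
Definition prob_diff_le (m1 m2 : nat) (p q : R) (k : Z) : R :=
  sum_f_R0 (fun x =>
    sum_f_R0 (fun r =>
      if Z_le_dec (Z.of_nat x - Z.of_nat r) k
      then binom_pmf m1 p x * binom_pmf m2 q r else 0) m2) m1.

Definition gamma_ (r1 r2 a b al : R) : R :=
  sqrt (al ^ 2 + 4 * r1 * r2 * a * b).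

Definition g (r1 r2 a b al : R) : R :=
  if Rlt_dec 0 r1 then
    if Rlt_dec 0 r2 then
      a * r1 + b * r2 - gamma_ r1 r2 a b al
      - al / 2 * ln (((gamma_ r1 r2 a b al - al) * a * r1)
                     / ((gamma_ r1 r2 a b al + al) * b * r2))
    else r1 * a - al * ln (exp 1 * r1 * a / al)
  else r2 * b + al * ln (- exp 1 * r2 * b / al).

(* Main.v *)
Require Import Defs.
From Stdlib Require Import Reals ZArith Arith Lra Lia.
From Coquelicot Require Import Coquelicot.
Open Scope R_scope.

Lemma C_nonneg m x : 0 <= Binomial.C m x.
Proof.
  unfold Binomial.C. apply Rmult_le_pos. apply pos_INR.
  apply Rlt_le, Rinv_0_lt_compat, Rmult_lt_0_compat; apply lt_0_INR, lt_O_fact.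
Qed.

Lemma pmf_nonneg m p x : 0 <= p <= 1 -> 0 <= binom_pmf m p x.
Proof.
  intros Hp. unfold binom_pmf. apply Rmult_le_pos. apply Rmult_le_pos.
  apply C_nonneg. apply pow_le; lra. apply pow_le; lra.
Qed.

Lemma sum_prod (A B : nat -> R) n m :
  sum_f_R0 A n * sum_f_R0 B m =
  sum_f_R0 (fun i => sum_f_R0 (fun j => A i * B j) m) n.
Proof.
  rewrite (Rmult_comm (sum_f_R0 A n)), scal_sum. apply sum_eq; intros i _.
  rewrite scal_sum. apply sum_eq; intros; ring.
Qed.

Lemma exp_pow_n u n : exp u ^ n = exp (INR n * u).
Proof.
  rewrite <- (ln_exp u) at 2. rewrite <- ln_pow by apply exp_pos.
  rewrite exp_ln; auto. apply pow_lt, exp_pos.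
Qed.

Lemma binom_mgf m p s : 0 <= p <= 1 -> 0 < s ->
  sum_f_R0 (fun x => binom_pmf m p x * s ^ x) m <= exp (INR m * (p * (s - 1))).
Proof.
  intros Hp Hs.
  assert (E : sum_f_R0 (fun x => binom_pmf m p x * s ^ x) m = (p * s + (1 - p)) ^ m).
  { rewrite binomial. apply sum_eq; intros i _. unfold binom_pmf.
    rewrite Rpow_mult_distr. ring. }
  rewrite E, <- exp_pow_n. apply pow_incr. split.
  - nra.
  - pose proof (exp_ineq1_le (p * (s - 1))). lra.
Qed.

Lemma chernoff (m1 m2 : nat) p q k s :
  0 <= p <= 1 -> 0 <= q <= 1 -> 0 < s <= 1 ->
  prob_diff_le m1 m2 p q k <=
  exp (INR m1 * (p * (s - 1)) + INR m2 * (q * (/ s - 1)) - IZR k * ln s).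
Proof.
  intros Hp Hq Hs. unfold prob_diff_le.
  apply Rle_trans with
    (sum_f_R0 (fun x => sum_f_R0 (fun r =>
       (binom_pmf m1 p x * s ^ x) * (binom_pmf m2 q r * (/ s) ^ r) * exp (- IZR k * ln s)) m2) m1).
  - apply sum_Rle; intros x _. apply sum_Rle; intros r _.
    assert (P1 := pmf_nonneg m1 p x Hp). assert (P2 := pmf_nonneg m2 q r Hq).
    replace (binom_pmf m1 p x * s ^ x * (binom_pmf m2 q r * (/ s) ^ r) * exp (- IZR k * ln s))
      with (binom_pmf m1 p x * binom_pmf m2 q r * exp ((INR x - INR r - IZR k) * ln s)).
    2:{ rewrite <- (exp_ln (s ^ x)) by (apply pow_lt; lra).
        rewrite <- (exp_ln ((/ s) ^ r)) by (apply pow_lt, Rinv_0_lt_compat; lra).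
        rewrite !ln_pow by (try apply Rinv_0_lt_compat; lra).
        rewrite ln_Rinv by lra.
        replace ((INR x - INR r - IZR k) * ln s) with
          (INR x * ln s + (INR r * - ln s + - IZR k * ln s)) by ring.
        rewrite !exp_plus. ring. }
    destruct (Z_le_dec (Z.of_nat x - Z.of_nat r) k) as [Hle|Hle].
    + rewrite <- (Rmult_1_r (binom_pmf m1 p x * binom_pmf m2 q r)) at 1.
      apply Rmult_le_compat_l. apply Rmult_le_pos; auto.
      apply IZR_le in Hle. rewrite minus_IZR, <- !INR_IZR_INZ in Hle.
      assert (ln s <= 0). { destruct (Req_dec s 1). subst; rewrite ln_1; lra.
        rewrite <- ln_1. left; apply ln_increasing; lra. }
      pose proof (exp_ineq1_le ((INR x - INR r - IZR k) * ln s)). nra.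
    + apply Rmult_le_pos. apply Rmult_le_pos; auto. left; apply exp_pos.
  - replace (sum_f_R0 _ m1) with
      (sum_f_R0 (fun i => binom_pmf m1 p i * s ^ i) m1 *
       sum_f_R0 (fun r => binom_pmf m2 q r * (/ s) ^ r) m2 * exp (- IZR k * ln s)).
    2:{ rewrite sum_prod, Rmult_comm, scal_sum. apply sum_eq; intros x _.
        rewrite Rmult_comm, scal_sum. apply sum_eq; intros; ring. }
    replace (INR m1 * (p * (s - 1)) + INR m2 * (q * (/ s - 1)) - IZR k * ln s) with
      (INR m1 * (p * (s - 1)) + (INR m2 * (q * (/ s - 1)) + - IZR k * ln s)) by ring.
    rewrite !exp_plus, <- Rmult_assoc.
    apply Rmult_le_compat_r. left; apply exp_pos.
    apply Rmult_le_compat.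
    + apply cond_pos_sum; intros; apply Rmult_le_pos. apply pmf_nonneg; auto. apply pow_le; lra.
    + apply cond_pos_sum; intros; apply Rmult_le_pos. apply pmf_nonneg; auto.
      apply pow_le; left; apply Rinv_0_lt_compat; lra.
    + apply binom_mgf; auto; lra.
    + apply binom_mgf; auto. apply Rinv_0_lt_compat; lra.
Qed.

Definition F (a b r1 r2 al s : R) : R :=
  r1 * a * (s - 1) + r2 * b * (/ s - 1) - al * ln s.

Lemma opt_s a b r1 r2 al : 0 < a -> 0 < b -> 0 <= r1 -> 0 <= r2 ->
  (0 < r1 \/ 0 < r2) -> al <= a * r1 - b * r2 -> (r2 = 0 -> 0 < al) ->
  exists s, 0 < s <= 1 /\ F a b r1 r2 al s = - g r1 r2 a b al /\
    r1 * a * s - r2 * b / s = al.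
Proof.
  intros ha hb h1 h2 hr hal h0. unfold g.
  destruct (Rlt_dec 0 r1) as [p1|p1]; [destruct (Rlt_dec 0 r2) as [p2|p2]|].
  - set (G := gamma_ r1 r2 a b al).
    assert (HG2 : G * G = al ^ 2 + 4 * r1 * r2 * a * b).
    { unfold G, gamma_. apply sqrt_sqrt.
      assert (0 < r1 * r2 * a * b) by (repeat apply Rmult_lt_0_compat; auto). nra. }
    assert (HG0 : 0 <= G) by apply sqrt_pos.
    assert (Hp : 0 < r1 * r2 * a * b) by (repeat apply Rmult_lt_0_compat; auto).
    assert (Hgp : G - al > 0) by nra.
    assert (Hgm : G + al > 0) by nra.
    exists ((al + G) / (2 * r1 * a)).
    assert (Hs : 0 < (al + G) / (2 * r1 * a)).
    { apply Rdiv_lt_0_compat. lra. nra. }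
    assert (Hb : r2 * b / ((al + G) / (2 * r1 * a)) = (G - al) / 2).
    { field_simplify_eq; try lra. all: nra. }
    split; [split|split].
    + exact Hs.
    + apply Rmult_le_reg_r with (2 * r1 * a). nra.
      unfold Rdiv. rewrite Rmult_assoc, Rinv_l by nra. rewrite Rmult_1_r, Rmult_1_l.
      assert (G <= 2 * r1 * a - al); [|lra].
      assert (0 < 2 * r1 * a - al) by nra.
      apply Rsqr_incr_0_var; unfold Rsqr; try lra.
      rewrite HG2. assert (4*r1*a*(r2*b) <= 4*r1*a*(r1*a-al)) by (apply Rmult_le_compat_l; nra). nra.
    + unfold F. fold G.
      replace ((G - al) * a * r1 / ((G + al) * b * r2)) with
        (/ ((al + G) / (2 * r1 * a) * ((al + G) / (2 * r1 * a)))).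
      2:{ field_simplify_eq. apply Rminus_diag_uniq. match goal with |- ?L - ?R = 0 => replace (L - R) with (r1*a*(al+G)*(al^2 + 4*r1*r2*a*b - G*G)) by ring end. rewrite HG2; ring. repeat split; lra. }
      rewrite ln_Rinv by nra. rewrite ln_mult by auto.
      replace (r2 * b * (/ ((al + G) / (2 * r1 * a)) - 1)) with
        (r2 * b / ((al + G) / (2 * r1 * a)) - r2 * b) by (field; nra).
      rewrite Hb. field_simplify. reflexivity. split; lra.
    + rewrite Hb. field; nra.
  - assert (r2 = 0) by lra. subst r2. specialize (h0 eq_refl).
    exists (al / (r1 * a)).
    assert (Hs : 0 < al / (r1 * a)) by (apply Rdiv_lt_0_compat; nra).
    split; [split|split].
    + exact Hs.
    + apply Rmult_le_reg_r with (r1 * a). nra.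
      unfold Rdiv. rewrite Rmult_assoc, Rinv_l by nra. lra.
    + unfold F. replace (exp 1 * r1 * a / al) with (exp 1 * (r1 * a / al)) by (field; lra). rewrite ln_mult, ln_exp, !ln_div by (try apply exp_pos; try apply Rdiv_lt_0_compat; nra). field. split; nra.
    + field; nra.
  - assert (r1 = 0) by lra. subst r1. destruct hr as [hr|hr]; [lra|].
    assert (al < 0) by nra.
    exists (- r2 * b / al).
    assert (Hs : 0 < - r2 * b / al).
    { unfold Rdiv. replace (- r2 * b * / al) with (r2 * b * / (- al)).
      apply Rmult_lt_0_compat. nra. apply Rinv_0_lt_compat; lra. field; lra. }
    split; [split|split].
    + exact Hs.
    + unfold Rdiv. replace (- r2 * b * / al) with (r2 * b * / (- al)) by (field; lra).
      apply Rmult_le_reg_r with (- al). lra.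
      rewrite Rmult_assoc, Rinv_l by lra. lra.
    + unfold F.
      replace (- exp 1 * r2 * b / al) with (exp 1 * (- r2 * b / al)) by (field; lra).
      rewrite ln_mult, ln_exp by (auto; apply exp_pos). field. lra.
    + field. split; nra.
Qed.

Lemma ln_le_sub1 y : 0 < y -> ln y <= y - 1.
Proof. intros. pose proof (exp_ineq1_le (ln y)). rewrite exp_ln in H0; lra. Qed.

Lemma ln_fact_upper x : (1 <= x)%nat ->
  ln (INR (fact x)) <= 1 - INR x + (INR x + 1) * ln (INR x).
Proof.
  induction x as [|x IH]; intros Hx; [lia|].
  destruct (Nat.eq_dec x 0) as [->|Hx0].
  - change (fact 1) with 1%nat. rewrite INR_1, ln_1. lra.
  - assert (Hx1 : (1 <= x)%nat) by lia. specialize (IH Hx1).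
    assert (Hxp : 1 <= INR x) by (apply (le_INR 1); lia).
    rewrite fact_simpl, mult_INR, ln_mult.
    2: apply lt_0_INR; lia.
    2: apply lt_0_INR, lt_O_fact.
    rewrite S_INR.
    assert (Hk : ln (INR x / (INR x + 1)) <= INR x / (INR x + 1) - 1)
      by (apply ln_le_sub1, Rdiv_lt_0_compat; lra).
    rewrite ln_div in Hk by lra.
    replace (INR x / (INR x + 1) - 1) with (- / (INR x + 1)) in Hk by (field; lra).
    assert (H2 : 1 <= (INR x + 1) * (ln (INR x + 1) - ln (INR x))).
    { apply Rmult_le_reg_l with (/ (INR x + 1)). apply Rinv_0_lt_compat; lra.
      rewrite <- Rmult_assoc, Rinv_l, Rmult_1_l, Rmult_1_r by lra. lra. }
    nra.
Qed.

Lemma ln_fact_lower j x : (1 <= j)%nat ->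
  ln (INR (fact j)) + INR x * ln (INR j) <= ln (INR (fact (j + x))).
Proof.
  intros Hj. induction x as [|x IH].
  - rewrite Nat.add_0_r. simpl. lra.
  - rewrite Nat.add_succ_r, fact_simpl, mult_INR, ln_mult.
    2: apply lt_0_INR; lia.
    2: apply lt_0_INR, lt_O_fact.
    rewrite S_INR.
    assert (ln (INR j) <= ln (INR (S (j + x)))).
    { apply ln_le. apply lt_0_INR; lia. apply le_INR; lia. }
    lra.
Qed.

Lemma C_pos m x : (x <= m)%nat -> 0 < Binomial.C m x.
Proof.
  intros. unfold Binomial.C. apply Rdiv_lt_0_compat. apply lt_0_INR, lt_O_fact.
  apply Rmult_lt_0_compat; apply lt_0_INR, lt_O_fact.
Qed.

Lemma pmf_lower m x p : (1 <= x)%nat -> (x < m)%nat -> 0 < p < 1 ->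
  0 < binom_pmf m p x /\
  INR x * ln ((INR m - INR x) * p / INR x) + INR x - 1 - ln (INR x)
    - INR m * p / (1 - p) <= ln (binom_pmf m p x).
Proof.
  intros Hx Hm Hp.
  assert (HC := C_pos m x ltac:(lia)).
  assert (Hpx : 0 < p ^ x) by (apply pow_lt; lra).
  assert (Hqx : 0 < (1 - p) ^ (m - x)) by (apply pow_lt; lra).
  split. { unfold binom_pmf. apply Rmult_lt_0_compat; [apply Rmult_lt_0_compat|]; auto. }
  assert (E : ln (binom_pmf m p x) = ln (INR (fact m)) - ln (INR (fact x)) - ln (INR (fact (m - x)))
     + INR x * ln p + INR (m - x) * ln (1 - p)).
  { unfold binom_pmf. rewrite !ln_mult by (auto; apply Rmult_lt_0_compat; auto).
    rewrite !ln_pow by lra.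
    unfold Binomial.C. rewrite ln_div, ln_mult by (try apply Rmult_lt_0_compat; apply lt_0_INR, lt_O_fact).
    ring. }
  rewrite E.
  assert (Hxr : 1 <= INR x) by (apply (le_INR 1); lia).
  assert (Hmx : INR m - INR x = INR (m - x)) by (rewrite minus_INR; lia || lra).
  assert (Hmx1 : 1 <= INR (m - x)) by (apply (le_INR 1); lia).
  pose proof (ln_fact_upper x Hx) as U.
  pose proof (ln_fact_lower (m - x) x ltac:(lia)) as Lo.
  replace (m - x + x)%nat with m in Lo by lia.
  rewrite Hmx.
  rewrite ln_div, ln_mult by (try apply Rmult_lt_0_compat; lra).

  assert (Hl1 : ln (1 - p) <= 0). { rewrite <- ln_1. apply ln_le; lra. }
  assert (Hl2 : - p / (1 - p) <= ln (1 - p)).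
  { pose proof (ln_le_sub1 (/ (1 - p)) ltac:(apply Rinv_0_lt_compat; lra)).
    rewrite ln_Rinv in H by lra.
    replace (/ (1 - p) - 1) with (p / (1 - p)) in H by (field; lra). lra. }
  assert (Hmm : INR (m - x) <= INR m) by (apply le_INR; lia).
  assert (H3 : INR m * (- p / (1 - p)) <= INR (m - x) * ln (1 - p)).
  { apply Rle_trans with (INR m * ln (1 - p)).
    apply Rmult_le_compat_l; [apply pos_INR|lra].
    nra. }
  replace (INR m * (- p / (1 - p))) with (- (INR m * p / (1 - p))) in H3 by (field; lra).
  lra.
Qed.

Lemma ev_gt u (l c : R) : is_lim_seq u l -> c < l -> eventually (fun n => c < u n).
Proof.
  intros H Hc. apply is_lim_seq_Reals in H. destruct (H (l - c)) as [N HN]; [lra|].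
  exists N. intros n Hn. specialize (HN n Hn). unfold Rdist in HN.
  apply Rabs_lt_between' in HN. lra.
Qed.

Lemma ev_lt u (l c : R) : is_lim_seq u l -> l < c -> eventually (fun n => u n < c).
Proof.
  intros H Hc. apply is_lim_seq_Reals in H. destruct (H (c - l)) as [N HN]; [lra|].
  exists N. intros n Hn. specialize (HN n Hn). unfold Rdist in HN.
  apply Rabs_lt_between' in HN. lra.
Qed.

Lemma ev_ge2 : eventually (fun n => (2 <= n)%nat).
Proof. exists 2%nat. auto. Qed.

Lemma Lpos n : (2 <= n)%nat -> 0 < ln (INR n).
Proof.
  intros. rewrite <- ln_1. apply ln_increasing. lra.
  apply (lt_INR 1); lia.
Qed.

Lemma lim_L : is_lim_seq (fun n => ln (INR n)) p_infty.
Proof.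
  apply (is_lim_comp_seq ln INR p_infty p_infty). apply is_lim_ln_p.
  exists 0%nat; intros; discriminate. apply is_lim_seq_INR.
Qed.

Lemma lim_invL : is_lim_seq (fun n => / ln (INR n)) 0.
Proof.
  apply (is_lim_seq_inv _ p_infty). apply lim_L. discriminate.
Qed.

Lemma lim_Ln : is_lim_seq (fun n => ln (INR n) / INR n) 0.
Proof.
  apply (is_lim_comp_seq (fun y => ln y / y) INR p_infty 0). apply is_lim_div_ln_p.
  exists 0%nat; intros; discriminate. apply is_lim_seq_INR.
Qed.

Lemma lim_lnL : is_lim_seq (fun n => ln (ln (INR n)) / ln (INR n)) 0.
Proof.
  apply (is_lim_comp_seq (fun y => ln y / y) (fun n => ln (INR n)) p_infty 0). apply is_lim_div_ln_p.
  exists 0%nat; intros; discriminate. apply lim_L.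
Qed.

Lemma cont_ln x : 0 < x -> continuity_pt ln x.
Proof. intros. apply continuity_pt_filterlim, continuous_ln; auto. Qed.

Lemma single_pos (c rho tau : R) (m x : nat -> nat) :
  0 < c -> 0 < rho -> 0 < tau ->
  is_lim_seq (fun n => INR (m n) / INR n) rho ->
  is_lim_seq (fun n => INR (x n) / ln (INR n)) tau ->
  exists l : nat -> R, is_lim_seq l (tau * (ln (rho * c / tau) + 1) - rho * c) /\
   eventually (fun n => (x n <= m n)%nat /\
      0 < binom_pmf (m n) (c * ln (INR n) / INR n) (x n) /\
      l n * ln (INR n) <= ln (binom_pmf (m n) (c * ln (INR n) / INR n) (x n))).
Proof.
  intros Hc Hr Ht HM HX.
  set (X := fun n => INR (x n) / ln (INR n)) in *.
  set (M := fun n => INR (m n) / INR n) in *.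
  set (Q := fun n => ln (INR n) / INR n).
  exists (fun n => X n * (ln ((M n - X n * Q n) * c / X n) + 1) - / ln (INR n)
     - (ln (X n) * / ln (INR n) + ln (ln (INR n)) / ln (INR n)) - M n * c / (1 - c * Q n)).
  assert (HQ : is_lim_seq Q 0) by apply lim_Ln.
  assert (HA : is_lim_seq (fun n => (M n - X n * Q n) * c / X n) ((rho - tau * 0) * c / tau)).
  { apply is_lim_seq_div'; [|auto|lra]. apply is_lim_seq_mult'; [|apply is_lim_seq_const].
    apply is_lim_seq_minus'; auto. apply is_lim_seq_mult'; auto. }
  replace ((rho - tau * 0) * c / tau) with (rho * c / tau) in HA by (field; lra).
  split.
  - replace (tau * (ln (rho * c / tau) + 1) - rho * c) with
      (tau * (ln (rho * c / tau) + 1) - 0 - (ln tau * 0 + 0) - rho * c / (1 - c * 0)) by (field; lra).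
    apply is_lim_seq_minus'; [apply is_lim_seq_minus'; [apply is_lim_seq_minus'|]|].
    + apply is_lim_seq_mult'; auto. apply is_lim_seq_plus'; [|apply is_lim_seq_const].
      apply is_lim_seq_continuous; auto. apply cont_ln.
      apply Rdiv_lt_0_compat; nra.
    + apply lim_invL.
    + apply is_lim_seq_plus'; [|apply lim_lnL]. apply is_lim_seq_mult'; [|apply lim_invL].
      apply is_lim_seq_continuous; auto. apply cont_ln; auto.
    + apply is_lim_seq_div'. apply is_lim_seq_mult'; auto. apply is_lim_seq_const.
      apply is_lim_seq_minus'. apply is_lim_seq_const. apply is_lim_seq_mult'; auto.
      apply is_lim_seq_const. lra.
  - assert (E1 := ev_gt _ _ 0 HX Ht).
    assert (E2 := ev_gt _ _ 0 HA ltac:(apply Rdiv_lt_0_compat; nra)).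
    assert (E3 : eventually (fun n => c * Q n < 1)).
    { apply (ev_lt _ (c * 0)). apply is_lim_seq_mult'; auto. apply is_lim_seq_const. lra. }
    generalize (filter_and _ _ ev_ge2 (filter_and _ _ E1 (filter_and _ _ E2 E3))).
    apply filter_imp. intros n [Hn [H1 [H2 H3]]].
    assert (HL := Lpos n Hn).
    assert (Hnr : 0 < INR n) by (apply lt_0_INR; lia).
    assert (Hxr : 0 < INR (x n)).
    { unfold X in H1. apply Rmult_lt_reg_r with (/ ln (INR n)).
      apply Rinv_0_lt_compat; auto. lra. }
    assert (HMX : 0 < M n - X n * Q n).
    { apply Rmult_lt_reg_r with (c / X n). apply Rdiv_lt_0_compat; auto.
      unfold Rdiv in *. lra. }
    assert (Hxm : INR (x n) < INR (m n)).
    { unfold M, X, Q in HMX.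
      replace (INR (m n) / INR n - INR (x n) / ln (INR n) * (ln (INR n) / INR n))
        with ((INR (m n) - INR (x n)) / INR n) in HMX by (field; lra).
      assert (0 < INR (m n) - INR (x n)); [|lra].
      apply Rmult_lt_reg_r with (/ INR n). apply Rinv_0_lt_compat; auto. lra. }
    apply INR_lt in Hxm.
    assert (Hx1 : (1 <= x n)%nat). { destruct (x n). simpl in Hxr; lra. lia. }
    assert (Hp : 0 < c * ln (INR n) / INR n < 1).
    { split. apply Rdiv_lt_0_compat; nra. replace (c * ln (INR n) / INR n) with (c * Q n) by (unfold Q; field; lra). lra. }
    destruct (pmf_lower (m n) (x n) _ Hx1 Hxm Hp) as [P1 P2].
    split; [lia|split; auto].
    eapply Rle_trans; [|exact P2].
    right.
    replace ((INR (m n) - INR (x n)) * (c * ln (INR n) / INR n) / INR (x n)) with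
      ((M n - X n * Q n) * c / X n) by (unfold M, X, Q; field; lra).
    replace (ln (INR (x n))) with (ln (X n) + ln (ln (INR n))).
    2:{ rewrite <- ln_mult by auto. f_equal. unfold X; field; lra. }
    assert (c * ln (INR n) < INR n).
    { unfold Q in H3. apply Rmult_lt_reg_r with (/ INR n). apply Rinv_0_lt_compat; auto.
      rewrite Rinv_r by lra. unfold Rdiv in H3. lra. }
    unfold M, X, Q. field. repeat split; lra.
Qed.

Lemma lim_opp u (l : R) : is_lim_seq u l -> is_lim_seq (fun n => - u n) (- l).
Proof. intros H. apply is_lim_seq_opp in H. exact H. Qed.

Lemma single_zero (c rho : R) (m : nat -> nat) :
  0 < c ->
  is_lim_seq (fun n => INR (m n) / INR n) rho ->
  exists l : nat -> R, is_lim_seq l (- (rho * c)) /\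
   eventually (fun n => 0 < binom_pmf (m n) (c * ln (INR n) / INR n) 0 /\
      l n * ln (INR n) <= ln (binom_pmf (m n) (c * ln (INR n) / INR n) 0)).
Proof.
  intros Hc HM.
  set (M := fun n => INR (m n) / INR n) in *.
  set (Q := fun n => ln (INR n) / INR n).
  exists (fun n => - (M n * c / (1 - c * Q n))).
  assert (HQ : is_lim_seq Q 0) by apply lim_Ln.
  split.
  - replace (- (rho * c)) with (- (rho * c / (1 - c * 0))) by (field; lra).
    apply lim_opp. apply is_lim_seq_div'. apply is_lim_seq_mult'; auto. apply is_lim_seq_const.
    apply is_lim_seq_minus'. apply is_lim_seq_const. apply is_lim_seq_mult'; auto.
    apply is_lim_seq_const. lra.
  - assert (E3 : eventually (fun n => c * Q n < 1)).
    { apply (ev_lt _ (c * 0)). apply is_lim_seq_mult'; auto. apply is_lim_seq_const. lra. }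
    generalize (filter_and _ _ ev_ge2 E3).
    apply filter_imp. intros n [Hn H3].
    assert (HL := Lpos n Hn).
    assert (Hnr : 0 < INR n) by (apply lt_0_INR; lia).
    assert (Hcl : c * ln (INR n) < INR n).
    { unfold Q in H3. apply Rmult_lt_reg_r with (/ INR n). apply Rinv_0_lt_compat; auto.
      rewrite Rinv_r by lra. unfold Rdiv in H3. lra. }
    set (p := c * ln (INR n) / INR n).
    assert (Hp : 0 < p < 1).
    { unfold p; split. apply Rdiv_lt_0_compat; nra.
      apply Rmult_lt_reg_r with (INR n); auto. unfold Rdiv. rewrite Rmult_assoc, Rinv_l; lra. }
    assert (E : binom_pmf (m n) p 0 = (1 - p) ^ (m n)).
    { unfold binom_pmf. rewrite C_n_0, Nat.sub_0_r. simpl. ring. }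
    rewrite E. split. apply pow_lt; lra.
    rewrite ln_pow by lra.
    assert (Hl2 : - p / (1 - p) <= ln (1 - p)).
    { pose proof (ln_le_sub1 (/ (1 - p)) ltac:(apply Rinv_0_lt_compat; lra)).
      rewrite ln_Rinv in H by lra.
      replace (/ (1 - p) - 1) with (p / (1 - p)) in H by (field; lra). lra. }
    apply Rle_trans with (INR (m n) * (- p / (1 - p))).
    + right. unfold M, Q, p. field. repeat split; lra.
    + apply Rmult_le_compat_l; auto. apply pos_INR.
Qed.

Lemma sum_nonneg_le (f : nat -> R) n : (forall j, (j <= n)%nat -> 0 <= f j) -> 0 <= sum_f_R0 f n.
Proof.
  induction n as [|n IH]; intros Hf; simpl. apply Hf; lia.
  assert (0 <= sum_f_R0 f n) by (apply IH; intros; apply Hf; lia).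
  assert (0 <= f (S n)) by (apply Hf; lia). lra.
Qed.

Lemma sum_ge_term (f : nat -> R) n i : (forall j, (j <= n)%nat -> 0 <= f j) -> (i <= n)%nat ->
  f i <= sum_f_R0 f n.
Proof.
  induction n as [|n IH]; intros Hf Hi.
  - replace i with 0%nat by lia. simpl. lra.
  - simpl. destruct (Nat.eq_dec i (S n)) as [->|Hne].
    + assert (0 <= sum_f_R0 f n) by (apply sum_nonneg_le; intros; apply Hf; lia). lra.
    + assert (f i <= sum_f_R0 f n) by (apply IH; [intros; apply Hf|]; lia).
      assert (0 <= f (S n)) by (apply Hf; lia). lra.
Qed.

Lemma prob_ge m1 m2 p q k x r : (x <= m1)%nat -> (r <= m2)%nat ->
  (Z.of_nat x - Z.of_nat r <= k)%Z -> 0 <= p <= 1 -> 0 <= q <= 1 ->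
  binom_pmf m1 p x * binom_pmf m2 q r <= prob_diff_le m1 m2 p q k.
Proof.
  intros Hx Hr Hk Hp Hq. unfold prob_diff_le.
  assert (Hnn : forall x r, 0 <= (if Z_le_dec (Z.of_nat x - Z.of_nat r) k
       then binom_pmf m1 p x * binom_pmf m2 q r else 0)).
  { intros x' r'. destruct Z_le_dec; [|lra]. apply Rmult_le_pos; apply pmf_nonneg; auto. }
  eapply Rle_trans; [|apply (sum_ge_term _ m1 x)].
  2:{ intros; apply sum_nonneg_le; intros; apply Hnn. }
  2: auto.
  cbv beta.
  eapply Rle_trans; [|apply (sum_ge_term _ m2 r)].
  2:{ intros; apply Hnn. }
  2: auto.
  cbv beta.
  destruct Z_le_dec; [lra|contradiction].
Qed.

Lemma point_lower m1 m2 p q k x r l1 l2 L : 0 <= p <= 1 -> 0 <= q <= 1 ->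
  (x <= m1)%nat -> (r <= m2)%nat -> (Z.of_nat x - Z.of_nat r <= k)%Z ->
  0 < binom_pmf m1 p x -> 0 < binom_pmf m2 q r ->
  l1 * L <= ln (binom_pmf m1 p x) -> l2 * L <= ln (binom_pmf m2 q r) ->
  0 < prob_diff_le m1 m2 p q k /\ (l1 + l2) * L <= ln (prob_diff_le m1 m2 p q k).
Proof.
  intros Hp Hq Hx Hr Hk P1 P2 L1 L2.
  assert (H := prob_ge m1 m2 p q k x r Hx Hr Hk Hp Hq).
  assert (0 < binom_pmf m1 p x * binom_pmf m2 q r) by (apply Rmult_lt_0_compat; auto).
  split. lra.
  apply Rle_trans with (ln (binom_pmf m1 p x * binom_pmf m2 q r)).
  rewrite ln_mult by auto. lra.
  apply ln_le; auto.
Qed.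

Lemma chernoff_n a b n m1 m2 k s : 0 < a -> 0 < b -> (2 <= n)%nat ->
  a * ln (INR n) / INR n <= 1 -> b * ln (INR n) / INR n <= 1 -> 0 < s <= 1 ->
  prob_diff_le m1 m2 (a * ln (INR n) / INR n) (b * ln (INR n) / INR n) k <=
  Rpower (INR n) (F a b (INR m1 / INR n) (INR m2 / INR n) (IZR k / ln (INR n)) s).
Proof.
  intros ha hb Hn Hp Hq Hs.
  assert (HL := Lpos n Hn).
  assert (Hnr : 0 < INR n) by (apply lt_0_INR; lia).
  eapply Rle_trans; [apply (chernoff _ _ _ _ _ s)|].
  - split; auto. left; apply Rdiv_lt_0_compat; nra.
  - split; auto. left; apply Rdiv_lt_0_compat; nra.
  - auto.
  - right. unfold Rpower, F. f_equal. field. split; lra.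
Qed.

Lemma ev_p c : 0 < c -> eventually (fun n => 0 <= c * ln (INR n) / INR n <= 1).
Proof.
  intros Hc.
  assert (E3 : eventually (fun n => c * (ln (INR n) / INR n) < 1)).
  { apply (ev_lt _ (c * 0)). apply is_lim_seq_mult'. apply is_lim_seq_const. apply lim_Ln. lra. }
  generalize (filter_and _ _ ev_ge2 E3). apply filter_imp. intros n [Hn H].
  assert (HL := Lpos n Hn).
  assert (Hnr : 0 < INR n) by (apply lt_0_INR; lia).
  split. left; apply Rdiv_lt_0_compat; nra. unfold Rdiv in *. lra.
Qed.

Lemma part2 (a b : R) (ha : 0 < a) (hb : 0 < b) :
  forall (n m1 m2 : nat) (k : Z),
     (2 <= n)%nat ->
     a * ln (INR n) / INR n <= 1 ->
     b * ln (INR n) / INR n <= 1 ->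
     (m1 <> 0 \/ m2 <> 0)%nat ->
     IZR k <= (INR m1 * a - INR m2 * b) * ln (INR n) / INR n ->
     (m2 = 0%nat -> (0 < k)%Z) ->
     prob_diff_le m1 m2 (a * ln (INR n) / INR n) (b * ln (INR n) / INR n) k
     <= Rpower (INR n)
          (- g (INR m1 / INR n) (INR m2 / INR n) a b (IZR k / ln (INR n))).
Proof.
  intros n m1 m2 k Hn Hp Hq Hm Hk Hk0.
  assert (HL := Lpos n Hn).
  assert (Hnr : 0 < INR n) by (apply lt_0_INR; lia).
  destruct (opt_s a b (INR m1 / INR n) (INR m2 / INR n) (IZR k / ln (INR n))) as [s [Hs [HF _]]]; auto.
  - apply Rdiv_le_0_compat; auto; apply pos_INR.
  - apply Rdiv_le_0_compat; auto; apply pos_INR.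
  - destruct Hm as [Hm|Hm]; [left|right]; apply Rdiv_lt_0_compat; auto; apply lt_0_INR; lia.
  - apply Rmult_le_reg_r with (ln (INR n)); auto.
    replace (IZR k / ln (INR n) * ln (INR n)) with (IZR k) by (field; lra).
    replace ((a * (INR m1 / INR n) - b * (INR m2 / INR n)) * ln (INR n)) with
      ((INR m1 * a - INR m2 * b) * ln (INR n) / INR n) by (field; lra). auto.
  - intros H0. assert (m2 = 0%nat).
    { apply INR_eq. simpl. apply Rmult_eq_reg_r with (/ INR n).
      unfold Rdiv in H0. lra. apply Rinv_neq_0_compat; lra. }
    specialize (Hk0 H). apply Rdiv_lt_0_compat; auto. apply IZR_lt; auto.
  - rewrite <- HF. apply chernoff_n; auto.
Qed.

Definition Pn a b (m1 m2 : nat -> nat) (k : nat -> Z) n :=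
  prob_diff_le (m1 n) (m2 n) (a * ln (INR n) / INR n) (b * ln (INR n) / INR n) (k n).

Lemma lim_plus0 u v (l : R) : is_lim_seq u l -> is_lim_seq v 0 -> is_lim_seq (fun n => u n + v n) l.
Proof.
  intros Hu Hv. replace (Finite l) with (Finite (l + 0)) by (f_equal; ring).
  apply is_lim_seq_plus'; auto.
Qed.

Lemma INR_Z2N z : (0 <= z)%Z -> INR (Z.to_nat z) = IZR z.
Proof. intros. rewrite INR_IZR_INZ, Z2Nat.id; auto. Qed.

Lemma lim_ceil t : 0 < t ->
  is_lim_seq (fun n => INR (Z.to_nat (up (t * ln (INR n)))) / ln (INR n)) t /\
  eventually (fun n => (0 < up (t * ln (INR n)))%Z).
Proof.
  intros Ht.
  assert (Hev : eventually (fun n => 0 < ln (INR n) /\ (0 < up (t * ln (INR n)))%Z /\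
      t * ln (INR n) < IZR (up (t * ln (INR n))) <= t * ln (INR n) + 1)).
  { generalize ev_ge2. apply filter_imp. intros n Hn. assert (HL := Lpos n Hn).
    destruct (archimed (t * ln (INR n))) as [A1 A2].
    split; auto. split; [|lra]. apply lt_IZR. nra. }
  split.
  - apply is_lim_seq_le_le_loc with (u := fun _ => t) (w := fun n => t + / ln (INR n)).
    + generalize Hev. apply filter_imp. intros n [HL [Hz [A1 A2]]].
      rewrite INR_Z2N by lia. split.
      * apply Rmult_le_reg_r with (ln (INR n)); auto.
        unfold Rdiv. rewrite Rmult_assoc, Rinv_l by lra. lra.
      * apply Rmult_le_reg_r with (ln (INR n)); auto.
        unfold Rdiv. rewrite Rmult_assoc, Rinv_l by lra.
        rewrite Rmult_plus_distr_r, Rinv_l by lra. lra.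
    + apply is_lim_seq_const.
    + apply lim_plus0. apply is_lim_seq_const. apply lim_invL.
  - generalize Hev. apply filter_imp. tauto.
Qed.

Lemma lower_A (a b al r1 r2 s : R) (m1 m2 : nat -> nat) (k : nat -> Z) :
  0 < a -> 0 < b -> 0 < r1 -> 0 < r2 -> 0 < s ->
  r1 * a * s - r2 * b / s = al ->
  is_lim_seq (fun n => INR (m1 n) / INR n) r1 ->
  is_lim_seq (fun n => INR (m2 n) / INR n) r2 ->
  is_lim_seq (fun n => IZR (k n) / ln (INR n)) al ->
  exists l : nat -> R, is_lim_seq l (F a b r1 r2 al s) /\
    eventually (fun n => 0 < Pn a b m1 m2 k n /\ l n * ln (INR n) <= ln (Pn a b m1 m2 k n)).
Proof.
  intros ha hb h1 h2 hs Htau HM1 HM2 HK.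
  set (t2 := r2 * b / s). set (t1 := r1 * a * s).
  assert (Ht2 : 0 < t2) by (apply Rdiv_lt_0_compat; nra).
  assert (Ht1 : 0 < t1) by (unfold t1; repeat apply Rmult_lt_0_compat; auto).
  set (rs := fun n => Z.to_nat (up (t2 * ln (INR n)))).
  set (xs := fun n => Z.to_nat (k n + Z.of_nat (rs n))).
  destruct (lim_ceil t2 Ht2) as [HR _]. fold rs in HR.
  assert (HS : is_lim_seq (fun n => IZR (k n) / ln (INR n) + INR (rs n) / ln (INR n)) t1).
  { replace t1 with (al + t2) by (unfold t1, t2; lra). apply is_lim_seq_plus'; auto. }
  assert (Hpos := ev_gt _ _ 0 HS Ht1).
  assert (Hz : eventually (fun n => (0 <= k n + Z.of_nat (rs n))%Z)).
  { generalize (filter_and _ _ ev_ge2 Hpos). apply filter_imp. intros n [Hn H].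
    assert (HL := Lpos n Hn). apply le_IZR. rewrite plus_IZR, <- INR_IZR_INZ.
    assert (0 < (IZR (k n) + INR (rs n)) / ln (INR n)) by (unfold Rdiv in *; lra).
    assert (0 < IZR (k n) + INR (rs n)); [|lra].
    apply Rmult_lt_reg_r with (/ ln (INR n)). apply Rinv_0_lt_compat; auto.
    unfold Rdiv in H0; lra. }
  assert (HX : is_lim_seq (fun n => INR (xs n) / ln (INR n)) t1).
  { apply is_lim_seq_ext_loc with (2 := HS). generalize Hz. apply filter_imp.
    intros n H. unfold xs. rewrite INR_Z2N by auto. rewrite plus_IZR, <- INR_IZR_INZ.
    unfold Rdiv; ring. }
  destruct (single_pos a r1 t1 m1 xs ha h1 Ht1 HM1 HX) as [l1 [L1 E1]].
  destruct (single_pos b r2 t2 m2 rs hb h2 Ht2 HM2 HR) as [l2 [L2 E2]].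
  exists (fun n => l1 n + l2 n). split.
  - replace (F a b r1 r2 al s) with
      ((t1 * (ln (r1 * a / t1) + 1) - r1 * a) + (t2 * (ln (r2 * b / t2) + 1) - r2 * b)).
    apply is_lim_seq_plus'; auto.
    unfold F. replace (r1 * a / t1) with (/ s) by (unfold t1; field; lra).
    replace (r2 * b / t2) with s by (unfold t2; field; lra).
    rewrite ln_Rinv by auto. rewrite <- Htau. unfold t1, t2. field. lra.
  - generalize (filter_and _ _ E1 (filter_and _ _ E2 (filter_and _ _ Hz
      (filter_and _ _ (ev_p a ha) (ev_p b hb))))).
    apply filter_imp. intros n [[X1 [X2 X3]] [[R1 [R2 R3]] [Z1 [Pa Pb]]]].
    unfold Pn. apply point_lower with (x := xs n) (r := rs n); auto.
    unfold xs. rewrite Z2Nat.id by auto. lia.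
Qed.

Lemma lower_B (a b al r1 s : R) (m1 m2 : nat -> nat) (k : nat -> Z) :
  0 < a -> 0 < b -> 0 < r1 -> 0 < al -> 0 < s ->
  r1 * a * s - 0 * b / s = al ->
  is_lim_seq (fun n => INR (m1 n) / INR n) r1 ->
  is_lim_seq (fun n => INR (m2 n) / INR n) 0 ->
  is_lim_seq (fun n => IZR (k n) / ln (INR n)) al ->
  exists l : nat -> R, is_lim_seq l (F a b r1 0 al s) /\
    eventually (fun n => 0 < Pn a b m1 m2 k n /\ l n * ln (INR n) <= ln (Pn a b m1 m2 k n)).
Proof.
  intros ha hb h1 hal hs Htau HM1 HM2 HK.
  set (xs := fun n => Z.to_nat (k n)).
  assert (Hpos := ev_gt _ _ 0 HK hal).
  assert (Hz : eventually (fun n => (0 <= k n)%Z)).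
  { generalize (filter_and _ _ ev_ge2 Hpos). apply filter_imp. intros n [Hn H].
    assert (HL := Lpos n Hn). apply le_IZR.
    assert (0 < IZR (k n)); [|lra].
    apply Rmult_lt_reg_r with (/ ln (INR n)). apply Rinv_0_lt_compat; auto.
    unfold Rdiv in H; lra. }
  assert (HX : is_lim_seq (fun n => INR (xs n) / ln (INR n)) al).
  { apply is_lim_seq_ext_loc with (2 := HK). generalize Hz. apply filter_imp.
    intros n H. unfold xs. rewrite INR_Z2N by auto. reflexivity. }
  destruct (single_pos a r1 al m1 xs ha h1 hal HM1 HX) as [l1 [L1 E1]].
  destruct (single_zero b 0 m2 hb HM2) as [l2 [L2 E2]].
  exists (fun n => l1 n + l2 n). split.
  - replace (F a b r1 0 al s) with
      ((al * (ln (r1 * a / al) + 1) - r1 * a) + (- (0 * b))).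
    apply is_lim_seq_plus'; auto.
    unfold F. replace (r1 * a / al) with (/ s) by (rewrite <- Htau; field; nra).
    rewrite ln_Rinv by auto. rewrite <- Htau. field. lra.
  - generalize (filter_and _ _ E1 (filter_and _ _ E2 (filter_and _ _ Hz
      (filter_and _ _ (ev_p a ha) (ev_p b hb))))).
    apply filter_imp. intros n [[X1 [X2 X3]] [[R2 R3] [Z1 [Pa Pb]]]].
    unfold Pn. apply point_lower with (x := xs n) (r := 0%nat); auto. lia.
    unfold xs. rewrite Z2Nat.id by auto. lia.
Qed.

Lemma lower_C (a b al r2 s : R) (m1 m2 : nat -> nat) (k : nat -> Z) :
  0 < a -> 0 < b -> 0 < r2 -> 0 < s ->
  0 * a * s - r2 * b / s = al ->
  is_lim_seq (fun n => INR (m1 n) / INR n) 0 ->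
  is_lim_seq (fun n => INR (m2 n) / INR n) r2 ->
  is_lim_seq (fun n => IZR (k n) / ln (INR n)) al ->
  exists l : nat -> R, is_lim_seq l (F a b 0 r2 al s) /\
    eventually (fun n => 0 < Pn a b m1 m2 k n /\ l n * ln (INR n) <= ln (Pn a b m1 m2 k n)).
Proof.
  intros ha hb h2 hs Htau HM1 HM2 HK.
  assert (hal : 0 < - al).
  { rewrite <- Htau. assert (0 < r2 * b / s) by (apply Rdiv_lt_0_compat; nra). lra. }
  set (rs := fun n => Z.to_nat (- k n)).
  assert (HK' := lim_opp _ _ HK).
  assert (Hpos := ev_gt _ _ 0 HK' hal).
  assert (Hz : eventually (fun n => (0 <= - k n)%Z)).
  { generalize (filter_and _ _ ev_ge2 Hpos). apply filter_imp. intros n [Hn H].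
    assert (HL := Lpos n Hn). apply le_IZR. rewrite opp_IZR.
    assert (0 < - IZR (k n)); [|lra].
    apply Rmult_lt_reg_r with (/ ln (INR n)). apply Rinv_0_lt_compat; auto.
    unfold Rdiv in H; lra. }
  assert (HR : is_lim_seq (fun n => INR (rs n) / ln (INR n)) (- al)).
  { apply is_lim_seq_ext_loc with (2 := HK'). generalize Hz. apply filter_imp.
    intros n H. unfold rs. rewrite INR_Z2N by auto. rewrite opp_IZR. unfold Rdiv; ring. }
  destruct (single_zero a 0 m1 ha HM1) as [l1 [L1 E1]].
  destruct (single_pos b r2 (- al) m2 rs hb h2 hal HM2 HR) as [l2 [L2 E2]].
  exists (fun n => l1 n + l2 n). split.
  - replace (F a b 0 r2 al s) with
      ((- (0 * a)) + (- al * (ln (r2 * b / - al) + 1) - r2 * b)).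
    apply is_lim_seq_plus'; auto.
    unfold F. replace (r2 * b / - al) with s.
    2:{ rewrite <- Htau. field. split; [|lra]. nra. }
    replace (r2 * b * (/ s - 1)) with (r2 * b / s - r2 * b) by (field; lra).
    replace (r2 * b / s) with (- al) by lra. ring.
  - generalize (filter_and _ _ E1 (filter_and _ _ E2 (filter_and _ _ Hz
      (filter_and _ _ (ev_p a ha) (ev_p b hb))))).
    apply filter_imp. intros n [[X2 X3] [[R1 [R2 R3]] [Z1 [Pa Pb]]]].
    unfold Pn. apply point_lower with (x := 0%nat) (r := rs n); auto. lia.
    unfold rs. rewrite Z2Nat.id by auto. lia.
Qed.

Lemma part1 (a b al r1 r2 : R)
  (ha : 0 < a) (hb : 0 < b) (hr1 : 0 <= r1) (hr2 : 0 <= r2)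
  (hr : 0 < r1 \/ 0 < r2) :
  (forall (m1 m2 : nat -> nat) (k : nat -> Z),
     Un_cv (fun n => INR (m1 n) / INR n) r1 ->
     Un_cv (fun n => INR (m2 n) / INR n) r2 ->
     Un_cv (fun n => IZR (k n) / ln (INR n)) al ->
     al <= a * r1 - b * r2 ->
     (r2 = 0 -> 0 < al) ->
     exists eps : nat -> R, Un_cv eps 0 /\
       exists N : nat, forall n : nat, (N <= n)%nat ->
         prob_diff_le (m1 n) (m2 n) (a * ln (INR n) / INR n)
                      (b * ln (INR n) / INR n) (k n)
         = Rpower (INR n) (- g r1 r2 a b al + eps n)).
Proof.
  intros m1 m2 k H1 H2 HK Hal Hr20.
  apply is_lim_seq_Reals in H1. apply is_lim_seq_Reals in H2. apply is_lim_seq_Reals in HK.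
  destruct (opt_s a b r1 r2 al ha hb hr1 hr2 hr Hal Hr20) as [s [[Hs0 Hs1] [HF Htau]]].
  assert (Low : exists l : nat -> R, is_lim_seq l (F a b r1 r2 al s) /\
    eventually (fun n => 0 < Pn a b m1 m2 k n /\ l n * ln (INR n) <= ln (Pn a b m1 m2 k n))).
  { destruct (Rlt_dec 0 r1) as [p1|p1]; destruct (Rlt_dec 0 r2) as [p2|p2].
    - apply lower_A; auto.
    - assert (r2 = 0) by lra. subst r2. apply lower_B; auto.
    - assert (r1 = 0) by lra. subst r1. apply lower_C; auto.
    - exfalso; lra. }
  destruct Low as [l [Hl El]].
  set (U := fun n => F a b (INR (m1 n) / INR n) (INR (m2 n) / INR n) (IZR (k n) / ln (INR n)) s).
  assert (HU : is_lim_seq U (F a b r1 r2 al s)).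
  { unfold U, F. apply is_lim_seq_minus'; [apply is_lim_seq_plus'|].
    - apply is_lim_seq_mult'; [|apply is_lim_seq_const]. apply is_lim_seq_mult'; auto. apply is_lim_seq_const.
    - apply is_lim_seq_mult'; [|apply is_lim_seq_const]. apply is_lim_seq_mult'; auto. apply is_lim_seq_const.
    - apply is_lim_seq_mult'; auto. apply is_lim_seq_const. }
  set (v := fun n => ln (Pn a b m1 m2 k n) / ln (INR n)).
  assert (Ev : eventually (fun n => (2 <= n)%nat /\ 0 < Pn a b m1 m2 k n /\ l n <= v n <= U n)).
  { generalize (filter_and _ _ ev_ge2 (filter_and _ _ El (filter_and _ _ (ev_p a ha) (ev_p b hb)))).
    apply filter_imp. intros n [Hn [[P0 PL] [Pa Pb]]].
    assert (HL := Lpos n Hn).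
    split; auto. split; auto. split.
    - unfold v. apply Rmult_le_reg_r with (ln (INR n)); auto.
      unfold Rdiv. rewrite Rmult_assoc, Rinv_l by lra. lra.
    - assert (Hc := chernoff_n a b n (m1 n) (m2 n) (k n) s ha hb Hn (proj2 Pa) (proj2 Pb) (conj Hs0 Hs1)).
      fold (Pn a b m1 m2 k n) in Hc. fold (U n) in Hc.
      apply ln_le in Hc; auto. rewrite ln_Rpower in Hc.
      unfold v. apply Rmult_le_reg_r with (ln (INR n)); auto.
      unfold Rdiv. rewrite Rmult_assoc, Rinv_l by lra. lra. }
  assert (Hv : is_lim_seq v (F a b r1 r2 al s)).
  { apply is_lim_seq_le_le_loc with (u := l) (w := U); auto.
    generalize Ev. apply filter_imp. tauto. }
  exists (fun n => v n + g r1 r2 a b al). split.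
  - apply is_lim_seq_Reals. replace 0 with (F a b r1 r2 al s + g r1 r2 a b al) by lra.
    apply is_lim_seq_plus'; auto. apply is_lim_seq_const.
  - destruct Ev as [N HN]. exists N. intros n Hn.
    destruct (HN n Hn) as [H2n [P0 _]].
    assert (HL := Lpos n H2n).
    unfold Rpower. replace (- g r1 r2 a b al + (v n + g r1 r2 a b al)) with (v n) by ring.
    unfold v. replace (ln (Pn a b m1 m2 k n) / ln (INR n) * ln (INR n)) with (ln (Pn a b m1 m2 k n))
      by (field; lra).
    rewrite exp_ln; auto.
Qed.

Theorem lemma2 (a b al r1 r2 : R)
  (ha : 0 < a) (hb : 0 < b) (hr1 : 0 <= r1) (hr2 : 0 <= r2)
  (hr : 0 < r1 \/ 0 < r2) :
  (* asymptotic part *)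
  (forall (m1 m2 : nat -> nat) (k : nat -> Z),
     Un_cv (fun n => INR (m1 n) / INR n) r1 ->
     Un_cv (fun n => INR (m2 n) / INR n) r2 ->
     Un_cv (fun n => IZR (k n) / ln (INR n)) al ->
     al <= a * r1 - b * r2 ->
     (r2 = 0 -> 0 < al) ->
     exists eps : nat -> R, Un_cv eps 0 /\
       exists N : nat, forall n : nat, (N <= n)%nat ->
         prob_diff_le (m1 n) (m2 n) (a * ln (INR n) / INR n)
                      (b * ln (INR n) / INR n) (k n)
         = Rpower (INR n) (- g r1 r2 a b al + eps n))
  /\
  (* non-asymptotic upper bound *)
  (forall (n m1 m2 : nat) (k : Z),
     (2 <= n)%nat ->
     a * ln (INR n) / INR n <= 1 ->
     b * ln (INR n) / INR n <= 1 ->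
     (m1 <> 0 \/ m2 <> 0)%nat ->
     IZR k <= (INR m1 * a - INR m2 * b) * ln (INR n) / INR n ->
     (m2 = 0%nat -> (0 < k)%Z) ->
     prob_diff_le m1 m2 (a * ln (INR n) / INR n) (b * ln (INR n) / INR n) k
     <= Rpower (INR n)
          (- g (INR m1 / INR n) (INR m2 / INR n) a b (IZR k / ln (INR n)))).
Proof.
  split.
  - apply part1; auto.
  - apply part2; auto.
Qed.
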